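(* Mumbling $H_\mu$ with unique mumbling and basis $\mathit{LTL}$ is at least as expressive as stuttering $H_\mu$ with unique stuttering and basis $\mathit{LTL}$; and mumbling $H_\mu$ with unique mumbling and full basis is at least as expressive as stuttering $H_\mu$ with unique stuttering and full basis.
   Context: Fix a finite set $\mathit{AP}$. A trace is an infinite sequence $P_0m_0P_1m_1\dots$ with $P_i\subseteq\mathit{AP}$, $m_i\in\{\mathit{int},\mathit{call},\mathit{ret}\}$; $\mathit{tr}(i)=P_i$. Successor functions: $\mathit{succ}_\mathsf{g}(\mathit{tr},i)=i+1$; $\mathit{succ}_\mathsf{a}(\mathit{tr},i)=i+1$ if $m_i=\mathit{int}$, and if $m_i=\mathit{call}$ the least $j>i$ such that among $m_i,\dots,m_{j-1}$ the numbers of $\mathit{call}$ and $\mathit{ret}$ coincide (undefined if none), undefined if $m_i=\mathit{ret}$; $\mathit{succ}_\mathsf{c}(\mathit{tr},i)$ the largest $j<i$ with $m_j=\mathit{call}$ such that among $m_{j+1},\dots,m_{i-1}$ the numbers of $\mathit{call}$ and $\mathit{ret}$ coincide (undefined if none). Mumbling $H_\mu$: trace formulae $\delta ::= \mathit{ap}\mid Y\mid\delta\lor\delta\mid\lnot\delta\mid\bigcirc^\mathsf{f}\delta\mid\mu Y.\delta$ ($\mathsf{f}\in\{\mathsf{g},\mathsf{a},\mathsf{c}\}$); multitrace formulae $\psi ::= [\delta]_\pi\mid X\mid\psi\lor\psi\mid\lnot\psi\mid\bigcirc^\Delta\psi\mid\mu X.\psi$ with $\Delta$ mapping trace variables to trace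 formulae; hyperproperty formulae $\varphi ::= \exists\pi.\varphi\mid\forall\pi.\varphi\mid\psi$; fixpoint variables occur positively; closed = all variables bound. Trace semantics $\llbracket\delta\rrbracket^{\mathit{tr}}_{\mathcal{V}}\subseteq\mathbb{N}_0$: $\mathit{ap}\mapsto\{i\mid\mathit{ap}\in\mathit{tr}(i)\}$, $Y\mapsto\mathcal{V}(Y)$, union, complement, $\bigcirc^\mathsf{f}\delta\mapsto\{i\mid\mathit{succ}_\mathsf{f}(\mathit{tr},i)$ defined and in $\llbracket\delta\rrbracket\}$, $\mu Y.\delta\mapsto\bigcap\{I\mid\llbracket\delta\rrbracket_{\mathcal{V}[Y\mapsto I]}\subseteq I\}$. $\mathit{succ}_\delta(\mathit{tr},i)=\min\{j>i\mid j\in\llbracket\delta\rrbracket^{\mathit{tr}}\}$ if nonempty, else $i+1$; $\mathit{succ}_\Delta(\Pi,v)$ componentwise for a trace assignment $\Pi$ on $\pi_1,\dots,\pi_n$. $\llbracket\psi\rrbracket^\Pi_{\mathcal{W}}\subseteq\mathbb{N}_0^n$: $[\delta]_{\pi_j}\mapsto\{v\mid v_j\in\llbracket\delta\rrbracket^{\Pi(\pi_j)}\}$, $X\mapsto\mathcal{W}(X)$, Boolean as usual, $\bigcirc^\Delta\psi\mapsto\{v\mid\mathit{succ}_\Delta(\Pi,v)\in\llbracket\psi\rrbracket\}$, $\mu X$ least fixpoint. $\Pi\models_\mathcal{T}\exists\pi.\varphi$ iff some $\mathit{tr}\in\mathcal{T}$ gives $\Pi[\pi\mapsto\mathit{tr}]\models_\mathcal{T}\varphi$;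 $\forall$ for all; $\Pi\models_\mathcal{T}\psi$ iff $(0,\dots,0)\in\llbracket\psi\rrbracket^\Pi$. For closed $\varphi$ and a set of traces $\mathcal{T}$, $\mathcal{T}\models\varphi$ iff the empty assignment satisfies $\varphi$ over $\mathcal{T}$. Stuttering $H_\mu$ is identical except that multitrace next operators are $\bigcirc^\Gamma\psi$ with $\Gamma$ mapping each trace variable to a finite set of trace formulae; for a finite set $\gamma$, $\mathit{succ}_\gamma(\mathit{tr},i)=\min\{j>i\mid$ for some $\delta\in\gamma$: $i\in\llbracket\delta\rrbracket^{\mathit{tr}}\not\Leftrightarrow j\in\llbracket\delta\rrbracket^{\mathit{tr}}\}$ if nonempty, else $i+1$; $\mathit{succ}_\Gamma$ componentwise and $\llbracket\bigcirc^\Gamma\psi\rrbracket=\{v\mid\mathit{succ}_\Gamma(\Pi,v)\in\llbracket\psi\rrbracket\}$. Fragments: unique mumbling (resp. unique stuttering) means all multitrace next operators of the formula use the same $\Delta$ (resp. $\Gamma$). The base formulae of $\varphi$ are the trace formulae occurring in tests $[\delta]_\pi$ or as values $\Delta(\pi)$ (resp. as elements of sets $\Gamma(\pi)$); the formula has basis $\mathcal{B}$ if all its base formulae lie in $\mathcal{B}$; full basis means no restriction. Basis $\mathit{LTL}$ is the set of LTL formulae: trace formulae built from atomic propositions using $\lnot$, $\lor$, $\bigcirc^\mathsf{g}$ and $\delta_1\,\mathcal{U}\,\delta_2:=\mu Y.(\delta_2\lor(\delta_1\land\bigcirc^\mathsf{g}Y))$ as the only fixpoint construct. Logic $L_1$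 is at least as expressive as logic $L_2$ if for every closed hyperproperty formula $\varphi$ of $L_2$ there is a closed hyperproperty formula $\varphi'$ of $L_1$ such that for all sets of traces $\mathcal{T}$, $\mathcal{T}\models\varphi$ iff $\mathcal{T}\models\varphi'$. *)

(* Defs.v *)
From mathcomp Require Import all_boot.
Set Implicit Arguments. Unset Strict Implicit. Unset Printing Implicit Defensive.

Fixpoint lIn (A : Type) (x : A) (l : seq A) : Prop :=
  match l with [::] => False | y :: l' => y = x \/ lIn x l' end.

Definition upd (T : Type) (V : nat -> T) (Y : nat) (x : T) : nat -> T :=
  fun Z => if Z == Y then x else V Z.

Inductive mode := MInt | MCall | MRet.

Definition isCall (m : mode) : bool := if m is MCall then true else false.
Definition isRet (m : mode) : bool := if m is MRet then true else false.

(* trace P_0 m_0 P_1 m_1 ... ; tr(i) = P_i *)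
Record trace (AP : finType) := Trace { tr_ap : nat -> {set AP}; tr_m : nat -> mode }.

Section Traces.
Variable AP : finType.
Implicit Types tr : trace AP.

Definition ncall tr i j := count (fun k => isCall (tr_m tr k)) (iota i (j - i)).
Definition nret tr i j := count (fun k => isRet (tr_m tr k)) (iota i (j - i)).
Definition balanced tr i j : Prop := ncall tr i j = nret tr i j.

(* successor functions, as (functional) relations: succ tr i j <-> succ(tr,i) = j *)
Definition succ_g tr (i j : nat) : Prop := j = i.+1.

Definition succ_a tr (i j : nat) : Prop :=
  (tr_m tr i = MInt /\ j = i.+1) \/
  (tr_m tr i = MCall /\ i < j /\ balanced tr i j /\
     forall k, i < k -> k < j -> ~ balanced tr i k).

Definition succ_c tr (i j : nat) : Prop :=
  j < i /\ tr_m tr j = MCall /\ balanced tr j.+1 i /\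
  forall k, j < k -> k < i -> ~ (tr_m tr k = MCall /\ balanced tr k.+1 i).

Definition dtr : trace AP := Trace (fun _ => set0) (fun _ => MInt).
End Traces.

Inductive dir := Dg | Da | Dc.

Inductive tform (AP : Type) :=
| TAp of AP
| TVar of nat
| TOr of tform AP & tform AP
| TNot of tform AP
| TNext of dir & tform AP
| TMu of nat & tform AP.

Section TraceFormulae.
Variable AP : finType.
Implicit Types (tr : trace AP) (d : tform AP).

Definition succ_f (f : dir) tr (i j : nat) : Prop :=
  match f with Dg => succ_g tr i j | Da => succ_a tr i j | Dc => succ_c tr i j end.

Fixpoint tsem tr (V : nat -> nat -> Prop) d : nat -> Prop :=
  match d with
  | TAp a => fun i => a \in tr_ap tr i
  | TVar Y => V Y
  | TOr d1 d2 => fun i => tsem tr V d1 i \/ tsem tr V d2 i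
  | TNot d1 => fun i => ~ tsem tr V d1 i
  | TNext f d1 => fun i => exists j, succ_f f tr i j /\ tsem tr V d1 j
  | TMu Y d1 => fun i => forall I : nat -> Prop,
                   (forall k, tsem tr (upd V Y I) d1 k -> I k) -> I i
  end.

Definition V0 : nat -> nat -> Prop := fun _ _ => False.

Fixpoint tfree (Y : nat) d : Prop :=
  match d with
  | TAp _ => False
  | TVar Z => Z = Y
  | TOr d1 d2 => tfree Y d1 \/ tfree Y d2
  | TNot d1 => tfree Y d1
  | TNext _ d1 => tfree Y d1
  | TMu Z d1 => Z <> Y /\ tfree Y d1
  end.

Fixpoint tpol (p : bool) (Y : nat) d : Prop :=
  match d with
  | TAp _ => True
  | TVar Z => Z = Y -> p = true
  | TOr d1 d2 => tpol p Y d1 /\ tpol p Y d2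
  | TNot d1 => tpol (~~ p) Y d1
  | TNext _ d1 => tpol p Y d1
  | TMu Z d1 => Z = Y \/ tpol p Y d1
  end.

Fixpoint tpos d : Prop :=
  match d with
  | TAp _ | TVar _ => True
  | TOr d1 d2 => tpos d1 /\ tpos d2
  | TNot d1 => tpos d1
  | TNext _ d1 => tpos d1
  | TMu Y d1 => tpol true Y d1 /\ tpos d1
  end.

Definition tclosed d : Prop := forall Y, ~ tfree Y d.
Definition twf d : Prop := tclosed d /\ tpos d.

Definition TAnd d1 d2 : tform AP := TNot (TOr (TNot d1) (TNot d2)).
Definition TUntil (Y : nat) d1 d2 : tform AP :=
  TMu Y (TOr d2 (TAnd d1 (TNext Dg (TVar AP Y)))).

Inductive isLTL : tform AP -> Prop :=
| LTL_ap a : isLTL (TAp a)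
| LTL_or d1 d2 : isLTL d1 -> isLTL d2 -> isLTL (TOr d1 d2)
| LTL_not d1 : isLTL d1 -> isLTL (TNot d1)
| LTL_next d1 : isLTL d1 -> isLTL (TNext Dg d1)
| LTL_until Y d1 d2 : isLTL d1 -> isLTL d2 -> ~ tfree Y d1 -> ~ tfree Y d2 ->
    isLTL (TUntil Y d1 d2).
End TraceFormulae.

(* Multitrace formulae, parametric in the label L of next operators     *)
(*   mumbling:   L = seq (tform AP)          (Delta, indexed by pi_j)   *)
(*   stuttering: L = seq (seq (tform AP))    (Gamma, finite sets as lists) *)
(* Trace variables pi_0, pi_1, ... are numbered by the quantifier that  *)
(* binds them (0 = outermost).                                          *)
Inductive mform (AP L : Type) :=
| MTest of tform AP & nat
| MVar of nat
| MOr of mform AP L & mform AP L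
| MNot of mform AP L
| MNext of L & mform AP L
| MMu of nat & mform AP L.

Inductive hform (AP L : Type) :=
| HEx of hform AP L
| HAll of hform AP L
| HBody of mform AP L.

Definition mlabel (AP : Type) := seq (tform AP).
Definition slabel (AP : Type) := seq (seq (tform AP)).

Section Multi.
Variable AP : finType.
Variable L : Type.
Implicit Types (psi : mform AP L) (phi : hform AP L).

Definition vec := nat -> nat.

Definition succ_min (S : nat -> Prop) (i j : nat) : Prop :=
  (i < j /\ S j /\ forall k, i < k -> k < j -> ~ S k) \/
  ((forall k, i < k -> ~ S k) /\ j = i.+1).

Variable step : L -> nat -> trace AP -> nat -> nat -> Prop.

Fixpoint msem (Pi : seq (trace AP)) (W : nat -> vec -> Prop) psi : vec -> Prop :=
  match psi with
  | MTest d j => fun v => tsem (nth (dtr AP) Pi j) (V0 : nat -> nat -> Prop) d (v j)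
  | MVar X => W X
  | MOr p1 p2 => fun v => msem Pi W p1 v \/ msem Pi W p2 v
  | MNot p1 => fun v => ~ msem Pi W p1 v
  | MNext l p1 => fun v => exists w : vec,
        (forall j, step l j (nth (dtr AP) Pi j) (v j) (w j)) /\ msem Pi W p1 w
  | MMu X p1 => fun v => forall I : vec -> Prop,
        (forall u, msem Pi (upd W X I) p1 u -> I u) -> I v
  end.

Definition W0 : nat -> vec -> Prop := fun _ _ => False.

Fixpoint hsat (T : trace AP -> Prop) (Pi : seq (trace AP)) phi : Prop :=
  match phi with
  | HEx p => exists tr, T tr /\ hsat T (rcons Pi tr) p
  | HAll p => forall tr, T tr -> hsat T (rcons Pi tr) p
  | HBody psi => msem Pi W0 psi (fun _ => 0)
  end.

Definition models (T : trace AP -> Prop) phi : Prop := hsat T [::] phi.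

Fixpoint mfree (X : nat) psi : Prop :=
  match psi with
  | MTest _ _ => False
  | MVar Z => Z = X
  | MOr p1 p2 => mfree X p1 \/ mfree X p2
  | MNot p1 => mfree X p1
  | MNext _ p1 => mfree X p1
  | MMu Z p1 => Z <> X /\ mfree X p1
  end.

Fixpoint mpol (p : bool) (X : nat) psi : Prop :=
  match psi with
  | MTest _ _ => True
  | MVar Z => Z = X -> p = true
  | MOr p1 p2 => mpol p X p1 /\ mpol p X p2
  | MNot p1 => mpol (~~ p) X p1
  | MNext _ p1 => mpol p X p1
  | MMu Z p1 => Z = X \/ mpol p X p1
  end.

Variable lwf : nat -> L -> Prop.
Fixpoint mwf (k : nat) psi : Prop :=
  match psi with
  | MTest d j => j < k /\ twf d
  | MVar _ => True
  | MOr p1 p2 => mwf k p1 /\ mwf k p2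
  | MNot p1 => mwf k p1
  | MNext l p1 => lwf k l /\ mwf k p1
  | MMu X p1 => mpol true X p1 /\ mwf k p1
  end.

Fixpoint hwf (k : nat) phi : Prop :=
  match phi with
  | HEx p | HAll p => hwf k.+1 p
  | HBody psi => mwf k psi /\ forall X, ~ mfree X psi
  end.

Fixpoint mlabels psi : seq L :=
  match psi with
  | MTest _ _ | MVar _ => [::]
  | MOr p1 p2 => mlabels p1 ++ mlabels p2
  | MNot p1 | MMu _ p1 => mlabels p1
  | MNext l p1 => l :: mlabels p1
  end.

Fixpoint hbody phi : mform AP L :=
  match phi with HEx p | HAll p => hbody p | HBody psi => psi end.

Variable lbasis : (tform AP -> Prop) -> L -> Prop.
Fixpoint mbasis (B : tform AP -> Prop) psi : Prop :=
  match psi with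
  | MTest d _ => B d
  | MVar _ => True
  | MOr p1 p2 => mbasis B p1 /\ mbasis B p2
  | MNot p1 | MMu _ p1 => mbasis B p1
  | MNext l p1 => lbasis B l /\ mbasis B p1
  end.
End Multi.

Section Instances.
Variable AP : finType.

Definition mstep (D : mlabel AP) (j : nat) (tr : trace AP) (i i' : nat) : Prop :=
  succ_min (tsem tr V0 (nth (TVar AP 0) D j)) i i'.

Definition sstep (G : slabel AP) (j : nat) (tr : trace AP) (i i' : nat) : Prop :=
  succ_min (fun k => exists d, lIn d (nth [::] G j) /\
                      ~ (tsem tr V0 d i <-> tsem tr V0 d k)) i i'.

Definition mlwf (k : nat) (D : mlabel AP) : Prop :=
  size D = k /\ forall d, lIn d D -> twf d.
Definition slwf (k : nat) (G : slabel AP) : Prop :=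
  size G = k /\ forall g d, lIn g G -> lIn d g -> twf d.

Definition mlbasis (B : tform AP -> Prop) (D : mlabel AP) : Prop :=
  forall d, lIn d D -> B d.
Definition slbasis (B : tform AP -> Prop) (G : slabel AP) : Prop :=
  forall g d, lIn g G -> lIn d g -> B d.

Definition unique_mumbling (phi : hform AP (mlabel AP)) : Prop :=
  forall D1 D2, lIn D1 (mlabels (hbody phi)) -> lIn D2 (mlabels (hbody phi)) -> D1 = D2.

(* Gamma maps trace variables to finite SETS: compare componentwise as sets *)
Definition unique_stuttering (phi : hform AP (slabel AP)) : Prop :=
  forall G1 G2, lIn G1 (mlabels (hbody phi)) -> lIn G2 (mlabels (hbody phi)) ->
    size G1 = size G2 /\
    forall j d, lIn d (nth [::] G1 j) <-> lIn d (nth [::] G2 j).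

Definition mumbling_unique_formula (B : tform AP -> Prop)
    (phi : hform AP (mlabel AP)) : Prop :=
  hwf mlwf 0 phi /\ unique_mumbling phi /\ mbasis mlbasis B (hbody phi).

Definition stuttering_unique_formula (B : tform AP -> Prop)
    (phi : hform AP (slabel AP)) : Prop :=
  hwf slwf 0 phi /\ unique_stuttering phi /\ mbasis slbasis B (hbody phi).

Definition mmodels (T : trace AP -> Prop) (phi : hform AP (mlabel AP)) : Prop :=
  models mstep T phi.
Definition smodels (T : trace AP -> Prop) (phi : hform AP (slabel AP)) : Prop :=
  models sstep T phi.

Definition mumb_at_least_stut (B1 B2 : tform AP -> Prop) : Prop :=
  forall phi : hform AP (slabel AP), stuttering_unique_formula B2 phi ->
    exists phi' : hform AP (mlabel AP), mumbling_unique_formula B1 phi' /\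
      forall T : trace AP -> Prop, smodels T phi <-> mmodels T phi'.
End Instances.

(* Main.v *)
Require Import Defs.
From mathcomp Require Import all_boot.
From Stdlib Require Import Classical IndefiniteDescription FunctionalExtensionality.
From mathcomp Require Import zify.
Set Implicit Arguments. Unset Strict Implicit. Unset Printing Implicit Defensive.

Lemma lIn_cat (A : Type) (x : A) s t : lIn x (s ++ t) <-> lIn x s \/ lIn x t.
Proof. elim: s => [|y s IH] /=; tauto. Qed.

Lemma choice_nat (R : nat -> nat -> Prop) :
  (forall j, exists t, R j t) -> exists f, forall j, R j (f j).
Proof.
move=> H. exists (fun j => proj1_sig (constructive_indefinite_description _ (H j))).
move=> j. exact: proj2_sig (constructive_indefinite_description _ (H j)).
Qed.

Lemma min_ex (P : nat -> Prop) : (exists n, P n) -> exists n, P n /\ forall m, m < n -> ~ P m.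
Proof.
case=> n; elim: n {-2}n (leqnn n) => [|n IH] m Hm Pm.
  exists m; split => // k Hk; lia.
case: (classic (exists k, k < m /\ P k)) => [[k [Hk Pk]]|Hn].
  apply: (IH k) => //; lia.
exists m; split => // k Hk Pk; apply: Hn; by exists k.
Qed.

Lemma sm_uniq S i j j' : succ_min S i j -> succ_min S i j' -> j = j'.
Proof.
case=> [[H1 [H2 H3]]|[H1 ->]]; case=> [[H1' [H2' H3']]|[H1' ->]] //.
- case: (ltngtP j j') => // Hl.
  + by case: (H3' j).
  + by case: (H3 j').
- by case: (H1' j).
- by case: (H1 j').
Qed.

Lemma sm_total S i : exists j, succ_min S i j.
Proof.
case: (classic (exists k, i < k /\ S k)) => [Hex|Hn].
  case: (min_ex Hex) => j [[Hij Sj] Hmin].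
  exists j; left; split => //; split => // k Hk Hkj Sk; apply: (Hmin k Hkj); by split.
exists i.+1; right; split => // k Hk Sk; apply: Hn; by exists k.
Qed.

Lemma sm_ext S S' i j : (forall k, S k <-> S' k) -> succ_min S i j -> succ_min S' i j.
Proof.
move=> H; case=> [[H1 [H2 H3]]|[H1 H2]]; [left|right].
  split => //; split; first by apply/H.
  move=> k Hk Hkj; rewrite -H; exact: H3.
split => // k Hk; rewrite -H; exact: H1.
Qed.

Lemma tsem_ext (AP : finType) (d : tform AP) tr V V' :
  (forall Z i, tfree Z d -> (V Z i <-> V' Z i)) -> forall i, tsem tr V d i <-> tsem tr V' d i.
Proof.
elim: d V V' => [a|Y|d1 IH1 d2 IH2|d1 IH1|f d1 IH1|Y d1 IH1] V V' H i /=.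
- tauto.
- by apply: H.
- rewrite (IH1 V V') ?(IH2 V V') //; move=> Z k Hz; apply: H => /=; tauto.
- rewrite (IH1 V V') //.
- split; case=> j [Hj Hs]; exists j; split => //; move: Hs; rewrite (IH1 V V') //.
- have HI : forall I k, tsem tr (upd V Y I) d1 k <-> tsem tr (upd V' Y I) d1 k.
    move=> I k; apply: IH1 => Z m Hz; rewrite /upd; case: eqP => // HZ.
    apply: H => /=; split => //; by move=> E; apply: HZ.
  split=> Hx I HI'; apply: Hx => k Hk; apply: HI'; move: Hk; by rewrite HI.
Qed.

Lemma tsem_closed (AP : finType) (d : tform AP) tr V V' i :
  tclosed d -> tsem tr V d i <-> tsem tr V' d i.
Proof. move=> Hc; apply: tsem_ext => Z k Hz; by case: (Hc Z). Qed.

Lemma msem_ext (AP : finType) L step Pi (psi : mform AP L) W W' :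
  (forall Z v, mfree Z psi -> (W Z v <-> W' Z v)) ->
  forall v, msem step Pi W psi v <-> msem step Pi W' psi v.
Proof.
elim: psi W W' => [d j|Y|p1 IH1 p2 IH2|p1 IH1|l p1 IH1|Y p1 IH1] W W' H v /=.
- tauto.
- by apply: H.
- rewrite (IH1 W W') ?(IH2 W W') //; move=> Z k Hz; apply: H => /=; tauto.
- rewrite (IH1 W W') //.
- split; case=> w [Hw Hs]; exists w; split => //; move: Hs; rewrite (IH1 W W') //.
- have HI : forall I k, msem step Pi (upd W Y I) p1 k <-> msem step Pi (upd W' Y I) p1 k.
    move=> I k; apply: IH1 => Z m Hz; rewrite /upd; case: eqP => // HZ.
    apply: H => /=; split => //; by move=> E; apply: HZ.
  split=> Hx I HI'; apply: Hx => k Hk; apply: HI'; move: Hk; by rewrite HI.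
Qed.

Lemma mpol_nonfree (AP : finType) L (psi : mform AP L) p X : ~ mfree X psi -> mpol p X psi.
Proof.
elim: psi p => [d j|Y|p1 IH1 p2 IH2|p1 IH1|l p1 IH1|Y p1 IH1] p /= H //.
- split; [apply: IH1|apply: IH2]; tauto.
- by apply: IH1.
- by apply: IH1.
- case: (eqVneq Y X) => [->|HY]; first by left.
  right; apply: IH1 => Hf; apply: H; split => //; exact/eqP.
Qed.

Lemma tpol_nonfree (AP : finType) (d : tform AP) p X : ~ tfree X d -> tpol p X d.
Proof.
elim: d p => [a|Y|p1 IH1 p2 IH2|p1 IH1|l p1 IH1|Y p1 IH1] p /= H //.
- split; [apply: IH1|apply: IH2]; tauto.
- by apply: IH1.
- by apply: IH1.
- case: (eqVneq Y X) => [->|HY]; first by left.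
  right; apply: IH1 => Hf; apply: H; split => //; exact/eqP.
Qed.

Lemma msem_mono (AP : finType) L step Pi (psi : mform AP L) X : forall p W W',
  (forall Z v, Z <> X -> (W Z v <-> W' Z v)) -> (forall v, W X v -> W' X v) ->
  mpol p X psi ->
  forall v, if p then (msem step Pi W psi v -> msem step Pi W' psi v)
            else (msem step Pi W' psi v -> msem step Pi W psi v).
Proof.
elim: psi => [d j|Y|p1 IH1 p2 IH2|p1 IH1|l p1 IH1|Y p1 IH1] p W W' HZ HX /= Hp v.
- by case: p.
- case: (eqVneq Y X) => [E|NE].
    subst; move: (Hp erefl) => ->; exact: HX.
  have E : W Y v <-> W' Y v by apply: HZ; exact/eqP.
  by case: p Hp => _; rewrite E.
- case: Hp => Hp1 Hp2.
  have := IH1 p W W' HZ HX Hp1 v; have := IH2 p W W' HZ HX Hp2 v.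
  case: p Hp1 Hp2 => _ _; tauto.
- have := IH1 (~~ p) W W' HZ HX Hp v; case: p Hp => /= _; tauto.
- have H := fun w => IH1 p W W' HZ HX Hp w.
  case: p H Hp => H _; case=> w [Hw Hs]; exists w; split => //; exact: H.
- case: (eqVneq Y X) => [E|NE].
    subst Y.
    have Hx : forall I u, msem step Pi (upd W X I) p1 u <-> msem step Pi (upd W' X I) p1 u.
      move=> I u; apply: msem_ext => Z w Hf; rewrite /upd; case: eqP => // Hn.
      by apply: HZ.
    case: p Hp => _ Hm I HI; apply: Hm => u Hu; apply: HI; by move: Hu; rewrite Hx.
  case: Hp => [E|Hp]; first by move: NE; rewrite E eqxx.
  have H := fun I => IH1 p (upd W Y I) (upd W' Y I).
  have HZ' : forall I Z v, Z <> X -> (upd W Y I Z v <-> upd W' Y I Z v).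
    move=> I Z w Hn; rewrite /upd; case: eqP => // _; exact: HZ.
  have HX' : forall I v, upd W Y I X v -> upd W' Y I X v.
    move=> I w; rewrite /upd; case: eqP => [E|_]; last exact: HX.
    by move: NE; rewrite E eqxx.
  case: p H Hp => H Hp Hm I HI; apply: Hm => u Hu; apply: HI;
    exact: (H I (HZ' I) (HX' I) Hp u).
Qed.

Lemma lfp_pre (AP : finType) L step Pi (psi : mform AP L) X W v :
  mpol true X psi ->
  msem step Pi (upd W X (msem step Pi W (MMu X psi))) psi v -> msem step Pi W (MMu X psi) v.
Proof.
move=> Hp Hv I HI; apply: (HI).
have := @msem_mono AP L step Pi psi X true (upd W X (msem step Pi W (MMu X psi)))
   (upd W X I) _ _ Hp v; apply => //.
- move=> Z w Hn; rewrite /upd; case: eqP => //.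
- move=> w; rewrite /upd eqxx => Hw; exact: (Hw I HI).
Qed.

Section Abs.
Variable E : nat -> nat -> Prop.
Hypothesis Erefl : forall i, E i i.
Hypothesis Esym : forall i j, E i j -> E j i.
Hypothesis Etrans : forall i j k, E i j -> E j k -> E i k.

Definition Dp i := ~ E i i.+1.
Definition ssucc s t := succ_min (fun k => ~ E s k) s t.
Definition msucc w t := succ_min Dp w t.
Definition bLag := Dp 0 \/ (forall k, ~ Dp k).
Definition relc (bb : bool) w s := if bb then s = w.+1 else exists m, msucc w m /\ s = m.+1.

Lemma Econst s n : s <= n -> (forall k, s <= k -> k < n -> E k k.+1) -> E s n.
Proof.
elim: n => [|n IH] Hs H; first by have -> : s = 0 by lia.
case: (eqVneq s n.+1) => [->//|Hne].
apply: (Etrans (j:=n)); first by apply: IH => [|k Hk Hkn]; [lia|apply: H; lia].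
apply: H; lia.
Qed.

Lemma split_first s : (exists j, s <= j /\ ~ E j j.+1 /\ forall k, s <= k -> k < j -> E k k.+1)
  \/ (forall k, s <= k -> E k k.+1).
Proof.
case: (classic (exists j, s <= j /\ ~ E j j.+1)) => [Hex|Hn].
  case: (min_ex Hex) => j [[Hsj Hj] Hmin]; left; exists j; split => //; split => // k Hk Hkj.
  apply: NNPP => Hc; exact: (Hmin k Hkj).
right => k Hk; apply: NNPP => Hc; apply: Hn; by exists k.
Qed.

Lemma ss_first s j : s <= j -> ~ E j j.+1 -> (forall k, s <= k -> k < j -> E k k.+1) -> ssucc s j.+1.
Proof.
move=> Hs Hj H; left; split; first lia.
have Hsj : E s j by apply: Econst.
split.
  move=> Hc; apply: Hj; apply: (Etrans (j:=s)) => //; exact: Esym.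
move=> k Hk Hkj Hc; apply: Hc; apply: Econst => [|m Hm Hmk]; [lia|apply: H; lia].
Qed.

Lemma ss_none s : (forall k, s <= k -> E k k.+1) -> ssucc s s.+1.
Proof.
move=> H; right; split => // k Hk Hc; apply: Hc; apply: Econst => [|m Hm Hmk]; [lia|apply: H; lia].
Qed.

Lemma ms_first w j : w < j -> ~ E j j.+1 -> (forall k, w < k -> k < j -> E k k.+1) -> msucc w j.
Proof. move=> Hw Hj H; left; split => //; split => // k Hk Hkj Hc; apply: Hc; exact: H. Qed.

Lemma ms_none w : (forall k, w < k -> E k k.+1) -> msucc w w.+1.
Proof. move=> H; right; split => // k Hk Hc; apply: Hc; exact: H. Qed.

Lemma Kstep w w' t : msucc w w' -> ssucc w.+1 t -> t = w'.+1.
Proof.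
move=> Hm Hs; case: (split_first w.+1) => [[j [Hj [Hnj Hk]]]|Hn].
  have -> := sm_uniq Hs (ss_first Hj Hnj Hk).
  have Hm' : msucc w j by apply: ms_first => // k Hk1 Hk2; apply: Hk; lia.
  by rewrite (sm_uniq Hm Hm').
have -> := sm_uniq Hs (ss_none Hn).
have Hm' : msucc w w.+1 by apply: ms_none => k Hk; apply: Hn; lia.
by rewrite (sm_uniq Hm Hm').
Qed.

Lemma init1 t : ssucc 0 t -> bLag -> t = 1.
Proof.
move=> Hs Hb; case: (split_first 0) => [[j [Hj [Hnj Hk]]]|Hn].
  have -> := sm_uniq Hs (ss_first Hj Hnj Hk).
  case: (posnP j) => [->//|Hj0].
  case: Hb => [HD|HN].
    by exfalso; apply: HD; apply: Hk.
  by case: (HN j).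
by have -> := sm_uniq Hs (ss_none Hn).
Qed.

Lemma init2 t w' : ssucc 0 t -> ~ bLag -> msucc 0 w' -> t = w'.+1.
Proof.
move=> Hs Hb Hm; case: (split_first 0) => [[j [Hj [Hnj Hk]]]|Hn].
  have -> := sm_uniq Hs (ss_first Hj Hnj Hk).
  case: (posnP j) => [Ej|Hj0].
    by exfalso; apply: Hb; left; move: Hnj; rewrite Ej.
  have Hm' : msucc 0 j by apply: ms_first => // k _ Hkj; apply: Hk.
  by rewrite (sm_uniq Hm Hm').
exfalso; apply: Hb; right => k Hc; apply: Hc; by apply: Hn.
Qed.

Lemma rel_step bb w s w' s' : relc bb w s -> msucc w w' -> ssucc s s' -> relc bb w' s'.
Proof.
case: bb => /=.
  move=> -> Hm Hs; exact: Kstep Hm Hs.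
case=> m [Hm ->] Hm' Hs; rewrite -(sm_uniq Hm Hm').
case: (sm_total Dp m) => m2 Hm2; exists m2; split => //; exact: Kstep Hm2 Hs.
Qed.

Lemma rel_fun bb w s s' : relc bb w s -> relc bb w s' -> s = s'.
Proof.
case: bb => /=; first by move=> -> ->.
by case=> m [Hm ->]; case=> m' [Hm' ->]; rewrite (sm_uniq Hm Hm').
Qed.

Lemma rel_tot bb w : exists s, relc bb w s.
Proof.
case: bb => /=; first by exists w.+1.
case: (sm_total Dp w) => m Hm; exists m.+1, m; by split.
Qed.

Lemma rel_init (bb : bool) t : (bb <-> bLag) -> ssucc 0 t -> relc bb 0 t.
Proof.
move=> Hb Hs; case: bb Hb => /= Hb.
  apply: init1 => //; exact/Hb.
case: (sm_total Dp 0) => m Hm; exists m; split => //.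
apply: init2 Hs _ Hm => Hc; by move/Hb: Hc.
Qed.

Lemma rel_pos bb w s : relc bb w s -> 0 < s.
Proof. case: bb => /=; first by move=> ->. by case=> m [_ ->]. Qed.
End Abs.

Section TF.
Variable AP : finType.
Implicit Types (d D a b : tform AP) (tr : trace AP).

Definition txor d := TOr (TAnd d (TNot (TNext Dg d))) (TAnd (TNot d) (TNext Dg d)).
Definition Dform (ff : tform AP) (g : seq (tform AP)) := foldr (fun d acc => TOr (txor d) acc) ff g.
Definition FinF D := TUntil 0 (TNot D) D.
Definition Lag D := TOr D (TNot (FinF D)).
Definition shN D d := TNext Dg (TOr (TUntil 0 (TNot D) (TAnd D (TNext Dg d)))
                                   (TAnd (TNot (FinF D)) (TNext Dg d))).
Definition sh (bb : bool) D d := if bb then TNext Dg d else shN D d.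

Lemma tAnd_sem tr V a b i : tsem tr V (TAnd a b) i <-> tsem tr V a i /\ tsem tr V b i.
Proof.
rewrite /TAnd /=; split; last tauto.
move=> H; split; apply: NNPP => Hc; apply: H; tauto.
Qed.

Lemma tNext_sem tr V d i : tsem tr V (TNext Dg d) i <-> tsem tr V d i.+1.
Proof. rewrite /=; split; [by case=> j [-> H]|by move=> H; exists i.+1]. Qed.

Lemma until_sem tr V Y d1 d2 i : ~ tfree Y d1 -> ~ tfree Y d2 ->
  (tsem tr V (TUntil Y d1 d2) i <->
   exists k, i <= k /\ tsem tr V d2 k /\ forall m, i <= m -> m < k -> tsem tr V d1 m).
Proof.
move=> H1 H2.
have E1 : forall I k, tsem tr (upd V Y I) d1 k <-> tsem tr V d1 k.
  move=> I k; apply: tsem_ext => Z m Hz; rewrite /upd; case: eqP => // E; subst; by case: H1.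
have E2 : forall I k, tsem tr (upd V Y I) d2 k <-> tsem tr V d2 k.
  move=> I k; apply: tsem_ext => Z m Hz; rewrite /upd; case: eqP => // E; subst; by case: H2.
have B : forall I k, tsem tr (upd V Y I) (TOr d2 (TAnd d1 (TNext Dg (TVar AP Y)))) k <->
    tsem tr V d2 k \/ (tsem tr V d1 k /\ I k.+1).
  move=> I k; have -> : tsem tr (upd V Y I) (TOr d2 (TAnd d1 (TNext Dg (TVar AP Y)))) k <->
     tsem tr (upd V Y I) d2 k \/ tsem tr (upd V Y I) (TAnd d1 (TNext Dg (TVar AP Y))) k by [].
  rewrite tAnd_sem tNext_sem E1 E2 /= /upd eqxx; tauto.
have U : tsem tr V (TUntil Y d1 d2) i <-> forall I : nat -> Prop,
   (forall k, tsem tr (upd V Y I) (TOr d2 (TAnd d1 (TNext Dg (TVar AP Y)))) k -> I k) -> I i by [].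
rewrite U; split.
  move=> H; apply: (H (fun m => exists k, m <= k /\ tsem tr V d2 k /\
                      forall m', m <= m' -> m' < k -> tsem tr V d1 m')) => k /B.
  case=> [Hd2|[Hd1 [k' [Hk' [Hd2 Hm]]]]]; first by exists k; split => //; split => // m' ? ?; lia.
  exists k'; split; first lia; split => // m' Hm1 Hm2.
  case: (eqVneq m' k) => [->//|Hne]; apply: Hm; lia.
case=> k [Hik [Hd2 Hm]] I HI.
have : forall n m, m + n = k -> i <= m -> I m.
  elim=> [|n IH] m Hmn Him.
    apply: HI; apply/B.
    left; by have -> : m = k by lia.
  apply: HI; apply/B.
  right; split; first (apply: Hm; lia).
  apply: IH; lia.
move=> H; apply: (H (k - i) i); lia.
Qed.

Lemma finF_sem tr V D i : tclosed D ->
  (tsem tr V (FinF D) i <-> exists k, i <= k /\ tsem tr V D k).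
Proof.
move=> Hc; rewrite /FinF until_sem; last by apply: Hc.
  2: by move=> /= H; apply: (Hc 0).
split; first by case=> k [Hk [HD _]]; exists k.
move=> Hex; have Hex' : exists k, i <= k /\ tsem tr V D k by [].
case: (min_ex Hex') => k [[Hik HD] Hmin]; exists k; split => //; split => // m Hm Hmk HDm.
apply: (Hmin m Hmk); by split.
Qed.

Lemma Lag_sem tr V D : tclosed D ->
  (tsem tr V (Lag D) 0 <-> tsem tr V D 0 \/ forall k, ~ tsem tr V D k).
Proof.
move=> Hc; have -> : tsem tr V (Lag D) 0 <-> tsem tr V D 0 \/ ~ tsem tr V (FinF D) 0 by [].
rewrite finF_sem //; split; case=> H; (try by left); right.
  by move=> k Hk; apply: H; exists k.
by case=> k [_ Hk]; apply: (H k).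
Qed.


Lemma txor_sem tr V d i : tsem tr V (txor d) i <-> ~ (tsem tr V d i <-> tsem tr V d i.+1).
Proof.
have -> : tsem tr V (txor d) i <-> tsem tr V (TAnd d (TNot (TNext Dg d))) i \/
     tsem tr V (TAnd (TNot d) (TNext Dg d)) i by [].
rewrite !tAnd_sem.
have -> : tsem tr V (TNot (TNext Dg d)) i <-> ~ tsem tr V (TNext Dg d) i by [].
have -> : tsem tr V (TNot d) i <-> ~ tsem tr V d i by [].
rewrite tNext_sem.
case: (classic (tsem tr V d i)); case: (classic (tsem tr V d i.+1)); tauto.
Qed.

Lemma Dform_sem ff (ffs : forall tr i, ~ tsem tr V0 ff i) g tr i :
  tsem tr V0 (Dform ff g) i <-> ~ (forall d, lIn d g -> (tsem tr V0 d i <-> tsem tr V0 d i.+1)).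
Proof.
elim: g => [|d g IH].
  split; [by move/ffs|move=> H; exfalso; apply: H => d []].
have -> : tsem tr V0 (Dform ff (d :: g)) i <->
   tsem tr V0 (txor d) i \/ tsem tr V0 (Dform ff g) i by [].
rewrite txor_sem IH; split.
  case=> H Hc; apply: H; [apply: Hc; by left|move=> d' Hd'; apply: Hc; by right].
move=> H; apply: NNPP => Hc; apply: H => d' [<-|Hd'].
  apply: NNPP => Hn; apply: Hc; by left.
apply: NNPP => Hn; apply: Hc; right => Hall; apply: Hn; exact: Hall.
Qed.

Lemma shN_sem tr D d w m : tclosed D -> tclosed d -> succ_min (tsem tr V0 D) w m ->
  (tsem tr V0 (shN D d) w <-> tsem tr V0 d m.+1).
Proof.
move=> Dc dc Hm.
have -> : tsem tr V0 (shN D d) w <->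
  tsem tr V0 (TUntil 0 (TNot D) (TAnd D (TNext Dg d))) w.+1 \/
  tsem tr V0 (TAnd (TNot (FinF D)) (TNext Dg d)) w.+1 by rewrite /shN tNext_sem.
rewrite until_sem; first last.
- move=> /= H; apply: (Dc 0); apply: NNPP => Hn; apply: (dc 0); tauto.
- by move=> /= H; apply: (Dc 0).
rewrite tAnd_sem.
have -> : tsem tr V0 (TNot (FinF D)) w.+1 <-> ~ tsem tr V0 (FinF D) w.+1 by [].
rewrite finF_sem // tNext_sem.
have E : forall k, tsem tr V0 (TAnd D (TNext Dg d)) k <-> tsem tr V0 D k /\ tsem tr V0 d k.+1.
  by move=> k; rewrite tAnd_sem tNext_sem.
have N : forall k, tsem tr V0 (TNot D) k <-> ~ tsem tr V0 D k by [].
case: Hm => [[Hwm [HDm Hmin]]|[Hn ->]].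
  split.
    case=> [[k [Hk [/E [HDk Hd] Hb]]]|[Hc _]].
      case: (ltngtP k m) => [Hl|Hl|Ekm]; last by rewrite -Ekm.
        by case: (Hmin k).
      by case: (Hb m) => //; apply/N.
    by case: Hc; exists m.
  move=> Hd; left; exists m; split => //; split; first by apply/E.
  move=> k Hk Hkm; apply/N; apply: Hmin => //.
split.
  case=> [[k [Hk [/E [HDk Hd] Hb]]]|[Hc Hd]] //.
  by case: (Hn k).
move=> Hd; right; split => //; by case=> k [Hk HDk]; apply: (Hn k).
Qed.

Lemma tc_or a b : tclosed a -> tclosed b -> tclosed (TOr a b).
Proof. move=> Ha Hb Y /= [H|H]; [exact: Ha H|exact: Hb H]. Qed.
Lemma tc_not a : tclosed a -> tclosed (TNot a).
Proof. by move=> Ha Y /= H; exact: Ha H. Qed.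
Lemma tc_next f a : tclosed a -> tclosed (TNext f a).
Proof. by move=> Ha Y /= H; exact: Ha H. Qed.
Lemma tc_and a b : tclosed a -> tclosed b -> tclosed (TAnd a b).
Proof. move=> Ha Hb; apply: tc_not; apply: tc_or; exact: tc_not. Qed.
Lemma tc_until Y a b : tclosed a -> tclosed b -> tclosed (TUntil Y a b).
Proof. move=> Ha Hb Z /= [HY [H|[H|H]]]; [exact: Hb H|exact: Ha H|done]. Qed.

Lemma tp_and a b : tpos a -> tpos b -> tpos (TAnd a b).
Proof. by move=> Ha Hb /=. Qed.
Lemma tp_until Y a b : tclosed a -> tclosed b -> tpos a -> tpos b -> tpos (TUntil Y a b).
Proof.
move=> Ca Cb Pa Pb /=; split; last by [].
split; first by apply: tpol_nonfree; apply: Cb.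
split; first by apply: tpol_nonfree; apply: Ca.
by [].
Qed.

Lemma twf_Dform ff g : twf ff -> (forall d, lIn d g -> twf d) -> twf (Dform ff g).
Proof.
move=> Hf; elim: g => [|d g IH] // H.
have [Cd Pd] : twf d by apply: H; left.
have [Cg Pg] : twf (Dform ff g) by apply: IH => d' Hd'; apply: H; right.
change (twf (TOr (txor d) (Dform ff g))).
split.
  apply: tc_or => //; rewrite /txor; apply: tc_or.
    apply: tc_and => //; apply: tc_not; exact: tc_next.
  apply: tc_and; [exact: tc_not|exact: tc_next].
change (tpos (txor d) /\ tpos (Dform ff g)); split => //; rewrite /=; tauto.
Qed.

Lemma twf_Lag D : twf D -> twf (Lag D).
Proof.
case=> Cd Pd; split.
  apply: tc_or => //; apply: tc_not; apply: tc_until => //; exact: tc_not.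
split => //; apply: tp_until => //; exact: tc_not.
Qed.

Lemma twf_sh bb D d : twf D -> twf d -> twf (sh bb D d).
Proof.
case=> CD PD [Cd Pd]; case: bb; rewrite /sh /shN.
  split; [exact: tc_next|done].
have CF : tclosed (FinF D) by apply: tc_until => //; exact: tc_not.
have PF : tpos (FinF D) by apply: tp_until => //; exact: tc_not.
split.
  apply: tc_next; apply: tc_or.
    apply: tc_until; [exact: tc_not|apply: tc_and => //; exact: tc_next].
  apply: tc_and; [exact: tc_not|exact: tc_next].
change (tpos (TUntil 0 (TNot D) (TAnd D (TNext Dg d))) /\ (tpos (FinF D) /\ tpos d)).
split; last by split.
apply: tp_until.
- exact: tc_not CD.
- apply: tc_and => //; exact: tc_next.
- exact: PD.
- by split.
Qed.

Definition Bclosed (B : tform AP -> Prop) :=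
  [/\ forall a b, B a -> B b -> B (TOr a b), forall a, B a -> B (TNot a),
      forall a, B a -> B (TNext Dg a) &
      forall a b, B a -> B b -> tclosed a -> tclosed b -> B (TUntil 0 a b)].

Lemma B_Dform B ff g : Bclosed B -> B ff -> (forall d, lIn d g -> B d /\ tclosed d) -> B (Dform ff g).
Proof.
rewrite /Bclosed; case=> Bor Bnot Bnext Bun Bf; elim: g => [|d g IH] // H.
change (B (TOr (txor d) (Dform ff g))).
apply: (Bor); last by apply: IH => d' Hd'; apply: H; right.
have [Bd _] : B d /\ tclosed d by apply: H; left.
rewrite /txor /TAnd; apply: (Bor); apply: (Bnot); apply: (Bor); auto.
Qed.

Lemma B_Lag B D : Bclosed B -> B D -> tclosed D -> B (Lag D).
Proof.
rewrite /Bclosed; case=> Bor Bnot Bnext Bun BD CD; apply: (Bor) => //; apply: (Bnot); apply: (Bun); auto.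
all: try exact: tc_not CD.
Qed.

Lemma B_sh B bb D d : Bclosed B -> B D -> B d -> tclosed D -> tclosed d -> B (sh bb D d).
Proof.
rewrite /Bclosed; case=> Bor Bnot Bnext Bun BD Bd CD Cd; case: bb; rewrite /sh /shN; first by auto.
have BA : forall a b, B a -> B b -> B (TAnd a b) by move=> a b Ha Hb; rewrite /TAnd; auto.
apply: (Bnext); apply: (Bor).
  apply: (Bun); auto.
  all: try exact: tc_not CD.
  all: try (apply: tc_and => //; exact: tc_next).
apply: (BA); auto; apply: (Bnot); apply: (Bun); auto.
all: try exact: tc_not CD.
Qed.
End TF.

Definition mclosed (AP : finType) L (phi : mform AP L) := forall Z, ~ mfree Z phi.

Fixpoint mok (AP : finType) L (psi : mform AP L) : Prop :=
  match psi with
  | MTest d _ => tclosed d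
  | MVar _ => True
  | MOr p q => mok p /\ mok q
  | MNot p => mok p
  | MNext _ p => mok p
  | MMu X p => mpol true X p /\ mok p
  end.

Lemma upd_inv_sem (AP : finType) L step Pi (s : nat -> mform AP L) Y X W I w :
  (s Y = MVar AP L Y \/ mclosed (s Y)) -> Y <> X ->
  msem step Pi (upd W X I) (s Y) w <-> msem step Pi W (s Y) w.
Proof.
case=> [->|Hc] Hn /=.
  rewrite /upd; case: eqP => //.
apply: msem_ext => Z v Hf; by case: (Hc Z).
Qed.

Section Trans.
Variable AP : finType.
Variable ff : tform AP.
Variable G0 : slabel AP.
Notation MF := (mform AP (mlabel AP)).
Notation SF := (mform AP (slabel AP)).
Notation mvar X := (MVar AP (mlabel AP) X).

Definition Dj j := Dform ff (nth [::] G0 j).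
Definition Del : mlabel AP := map (Dform ff) G0.

Fixpoint Btr (b : nat -> bool) (s : nat -> MF) (psi : SF) : MF :=
  match psi with
  | MTest d j => MTest _ (sh (b j) (Dj j) d) j
  | MVar X => s X
  | MOr p q => MOr (Btr b s p) (Btr b s q)
  | MNot p => MNot (Btr b s p)
  | MNext _ p => MNext Del (Btr b s p)
  | MMu X p => MMu X (Btr b (upd s X (mvar X)) p)
  end.

Fixpoint Atr (b : nat -> bool) (s : nat -> MF) (psi : SF) : MF :=
  match psi with
  | MTest d j => MTest _ d j
  | MVar X => mvar X
  | MOr p q => MOr (Atr b s p) (Atr b s q)
  | MNot p => MNot (Atr b s p)
  | MNext _ p => Btr b s p
  | MMu X p => MMu X (Atr b (upd s X (Btr b s (MMu X p))) p)
  end.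

Definition MAnd (p q : MF) : MF := MNot (MOr (MNot p) (MNot q)).

Fixpoint choose (n : nat) (bb : nat -> bool) (psi : SF) : MF :=
  match n with
  | 0 => Atr bb (fun X => mvar X) psi
  | n'.+1 => MOr (MAnd (MTest _ (Lag (Dj n')) n') (choose n' (upd bb n' true) psi))
                 (MAnd (MNot (MTest _ (Lag (Dj n')) n')) (choose n' (upd bb n' false) psi))
  end.

Definition inv (s : nat -> MF) := forall Y, s Y = mvar Y \/ mclosed (s Y).

Lemma FVB b s psi Z : mfree Z (Btr b s psi) -> exists Y, mfree Y psi /\ mfree Z (s Y).
Proof.
elim: psi s => [d j|Y|p1 IH1 p2 IH2|p1 IH1|l p1 IH1|X p1 IH1] s /=.
- done.
- move=> H; by exists Y.
- case=> [/IH1|/IH2] [Y [H1 H2]]; exists Y; tauto.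
- move/IH1 => [Y [H1 H2]]; by exists Y.
- move/IH1 => [Y [H1 H2]]; by exists Y.
- case=> HX /IH1 [Y [H1 H2]]; move: H2; rewrite /upd; case: eqP => [EY|HY] H2.
    by case: (HX H2).
  exists Y; split => //; split => //; by move=> E; apply: HY.
Qed.

Lemma FVA b s psi Z : mfree Z (Atr b s psi) -> mfree Z psi \/ exists Y, mfree Y psi /\ mfree Z (s Y).
Proof.
elim: psi s => [d j|Y|p1 IH1 p2 IH2|p1 IH1|l p1 IH1|X p1 IH1] s /=.
- done.
- by left.
- case=> [/IH1|/IH2] [H|[Y [H1 H2]]]; try tauto; right; exists Y; tauto.
- by move/IH1.
- by move/FVB => H; right.
- case=> HX /IH1 [H|[Y [H1 H2]]]; first by left.
  move: H2; rewrite /upd; case: eqP => [EY|HY] H2.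
    move: (@FVB b s (MMu X p1) Z H2) => [Y' [H1' H2']]; right; by exists Y'.
  right; exists Y; split => //; split => //; by move=> E; apply: HY.
Qed.

Lemma PB b psi : forall p X s, mpol p X psi -> s X = mvar X ->
  (forall Y, Y <> X -> ~ mfree X (s Y)) -> mpol p X (Btr b s psi).
Proof.
elim: psi => [d j|Y|p1 IH1 p2 IH2|p1 IH1|l p1 IH1|Z p1 IH1] p X s /= Hp HsX Hs.
- done.
- case: (eqVneq Y X) => [EYX|HY].
    by subst Y; rewrite HsX.
  have HY' : Y <> X by apply/eqP.
  exact: mpol_nonfree (Hs Y HY').
- case: Hp => H1 H2; split; [exact: IH1|exact: IH2].
- exact: IH1.
- exact: IH1.
- case: (eqVneq Z X) => [->|HZ]; first by left.
  right; case: Hp => [E|Hp]; first by move: HZ; rewrite E eqxx.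
  apply: IH1 => //.
    by rewrite /upd eq_sym (negbTE HZ).
  move=> Y HY; rewrite /upd; case: eqP => [EYZ|_]; last exact: Hs.
  by move=> /= E; move: HZ; rewrite E eqxx.
Qed.

Lemma PA b psi : forall p X s, mpol p X psi -> (forall Y, ~ mfree X (s Y)) -> mpol p X (Atr b s psi).
Proof.
elim: psi => [d j|Y|p1 IH1 p2 IH2|p1 IH1|l p1 IH1|Z p1 IH1] p X s /= Hp Hs.
- done.
- done.
- case: Hp => H1 H2; split; [exact: IH1|exact: IH2].
- exact: IH1.
- apply: mpol_nonfree => H; case: (FVB H) => Y [_ H2]; exact: (Hs Y H2).
- case: (eqVneq Z X) => [->|HZ]; first by left.
  right; case: Hp => [E|Hp]; first by move: HZ; rewrite E eqxx.
  apply: IH1 => // Y; rewrite /upd; case: eqP => [EYZ|_]; last exact: Hs.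
  move=> H; case: (@FVB b s (MMu Z p1) X H) => Y' [_ H2]; exact: (Hs Y' H2).
Qed.

Lemma lIn_nth (A : Type) (s : seq A) x0 j : j < size s -> lIn (nth x0 s j) s.
Proof. elim: s j => [|x s IH] [|j] //= Hj; [by left|right; exact: IH]. Qed.

Definition SLok (psi : SF) := forall l, lIn l (mlabels psi) ->
  forall j tr i i', sstep l j tr i i' <-> sstep G0 j tr i i'.

Section Sem.
Variable Pi : seq (trace AP).
Hypothesis ffs : forall tr i, ~ tsem tr V0 ff i.
Hypothesis ffw : twf ff.
Hypothesis G0w : forall g d, lIn g G0 -> lIn d g -> twf d.

Definition trk j := nth (dtr AP) Pi j.
Definition Ej j i k := forall d, lIn d (nth [::] G0 j) ->
  (tsem (trk j) V0 d i <-> tsem (trk j) V0 d k).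
Lemma Erefl j i : Ej j i i. Proof. by move=> d. Qed.
Lemma Esym j i k : Ej j i k -> Ej j k i.
Proof. move=> H d Hd; have := H d Hd; tauto. Qed.
Lemma Etrans j i k l : Ej j i k -> Ej j k l -> Ej j i l.
Proof. move=> H1 H2 d Hd; have := H1 d Hd; have := H2 d Hd; tauto. Qed.

Lemma nthG0_w j d : lIn d (nth [::] G0 j) -> twf d.
Proof.
case: (ltnP j (size G0)) => Hj Hd.
  apply: (G0w (g:=nth [::] G0 j)) => //; exact: lIn_nth.
by move: Hd; rewrite nth_default.
Qed.

Lemma Dj_wf j : twf (Dj j).
Proof. apply: twf_Dform => //; exact: nthG0_w. Qed.

Lemma Dsem j i : tsem (trk j) V0 (Dj j) i <-> Dp (Ej j) i.
Proof. exact: Dform_sem. Qed.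

Lemma mstep_eq j w w' : mstep Del j (trk j) w w' <-> msucc (Ej j) w w'.
Proof.
have E : forall i, tsem (trk j) V0 (nth (TVar AP 0) Del j) i <-> Dp (Ej j) i.
  move=> i; rewrite -Dsem /Dj /Del; case: (ltnP j (size G0)) => Hj.
    by rewrite (nth_map [::]).
  rewrite !nth_default ?size_map //=; split => // /ffs //.
rewrite /mstep /msucc; split => H; apply: sm_ext H => k; [exact: E|symmetry; exact: E].
Qed.

Lemma sstep_eq j s s' : sstep G0 j (trk j) s s' <-> ssucc (Ej j) s s'.
Proof.
have E : forall k, (exists d, lIn d (nth [::] G0 j) /\
                     ~ (tsem (trk j) V0 d s <-> tsem (trk j) V0 d k)) <-> ~ Ej j s k.
  move=> k; split.
    case=> d [Hd Hn] H; apply: Hn; exact: H.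
  move=> H; apply: NNPP => Hn; apply: H => d Hd; apply: NNPP => Hc; apply: Hn; by exists d.
rewrite /sstep /ssucc; split => H; apply: sm_ext H => k; [exact: E|symmetry; exact: E].
Qed.

Variable b : nat -> bool.
Definition rel (w s : vec) := forall j, relc (Ej j) (b j) (w j) (s j).
Definition zv : vec := fun _ => 0.

Lemma rel_fun_v w s s' : rel w s -> rel w s' -> s = s'.
Proof. move=> H H'; apply: functional_extensionality => j; exact: rel_fun (H j) (H' j). Qed.

Lemma rel_tot_v w : exists s, rel w s.
Proof. apply: (choice_nat (R := fun j t => relc (Ej j) (b j) (w j) t)) => j; exact: rel_tot. Qed.

Lemma rel_pos_v w s : rel w s -> s <> zv.
Proof. move=> H E; have := rel_pos (H 0); by rewrite E. Qed.

Lemma mstep_tot w : exists w', forall j, mstep Del j (trk j) (w j) (w' j).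
Proof.
apply: (choice_nat (R := fun j t => mstep Del j (trk j) (w j) t)) => j.
case: (sm_total (Dp (Ej j)) (w j)) => t Ht; exists t; exact/mstep_eq.
Qed.

Lemma sstep_tot s : exists s', forall j, sstep G0 j (trk j) (s j) (s' j).
Proof.
apply: (choice_nat (R := fun j t => sstep G0 j (trk j) (s j) t)) => j.
case: (sm_total (fun k => ~ Ej j (s j) k) (s j)) => t Ht; exists t; exact/sstep_eq.
Qed.

Lemma rel_step_v w s w' s' : rel w s -> (forall j, mstep Del j (trk j) (w j) (w' j)) ->
  (forall j, sstep G0 j (trk j) (s j) (s' j)) -> rel w' s'.
Proof.
move=> H Hm Hs j; apply: (rel_step (@Erefl j) (@Esym j) (@Etrans j) (H j)).
  exact/mstep_eq.
exact/sstep_eq.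
Qed.

Lemma SL_or p q : SLok (MOr p q) -> SLok p /\ SLok q.
Proof. move=> H; split => l Hl; apply: H; rewrite /= lIn_cat; tauto. Qed.
Lemma SL_next l p : SLok (MNext l p) -> SLok p /\ (forall j tr i i', sstep l j tr i i' <-> sstep G0 j tr i i').
Proof. move=> H; split; [move=> l' Hl; apply: H; by right|apply: H; by left]. Qed.

Notation msM := (msem (@mstep AP) Pi).
Notation msS := (msem (@sstep AP) Pi).

Lemma BC psi : forall s Wm Ws, SLok psi -> mok psi -> inv s ->
  (forall X w t, rel w t -> (msM Wm (s X) w <-> Ws X t)) ->
  forall w t, rel w t -> (msM Wm (Btr b s psi) w <-> msS Ws psi t).
Proof.
elim: psi => [d j|Y|p1 IH1 p2 IH2|p1 IH1|l p1 IH1|X p1 IH1] s Wm Ws HSL Hok Hinv Hs w t Hr.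
- rewrite /= -/(trk j); move: (Hr j); rewrite /relc /sh; case: (b j) => [->|[m [Hm ->]]].
    exact: tNext_sem.
  apply: shN_sem => //; first exact: (Dj_wf j).1.
  apply: sm_ext Hm => k; symmetry; exact: Dsem.
- exact: Hs.
- case: (SL_or HSL) => H1 H2; case: Hok => O1 O2.
  rewrite /= (IH1 s Wm Ws H1 O1 Hinv Hs w t Hr) (IH2 s Wm Ws H2 O2 Hinv Hs w t Hr) //.
- rewrite /= (IH1 s Wm Ws HSL Hok Hinv Hs w t Hr) //.
- case: (SL_next HSL) => H1 H2 /=; split.
    case=> w' [Hw' Hm]; case: (sstep_tot t) => t' Ht'.
    have Hr' : rel w' t' by apply: rel_step_v Hr Hw' Ht'.
    exists t'; split; first by move=> j; apply/H2; exact: Ht'.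
    by rewrite -(IH1 s Wm Ws H1 Hok Hinv Hs w' t' Hr').
  case=> t' [Ht' Hm]; case: (mstep_tot w) => w' Hw'.
  have Hr' : rel w' t' by apply: rel_step_v Hr Hw' _ => j; apply/H2; exact: Ht'.
  exists w'; split => //; by rewrite (IH1 s Wm Ws H1 Hok Hinv Hs w' t' Hr').
- case: Hok => Hpol Hok.
  set s' := upd s X (mvar X).
  have Hinv' : inv s'.
    move=> Y; rewrite /s' /upd; case: eqP => [->|_]; [by left|exact: Hinv].
  have Hsub : forall (I S : vec -> Prop), (forall u v, rel u v -> (I u <-> S v)) ->
      forall u v, rel u v -> (msM (upd Wm X I) (Btr b s' p1) u <-> msS (upd Ws X S) p1 v).
    move=> I S HIS; apply: IH1 => // Y u v Huv.
    case: (eqVneq Y X) => [->|NYX].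
      rewrite /s' /upd eqxx /= eqxx; exact: HIS.
    have NYX' : Y <> X by apply/eqP.
    have -> : s' Y = s Y by rewrite /s' /upd (negbTE NYX).
    have -> : upd Ws X S Y v = Ws Y v by rewrite /upd (negbTE NYX).
    rewrite (@upd_inv_sem AP _ (@mstep AP) Pi s Y X Wm I u (Hinv Y) NYX'); exact: Hs.
  have Hpol' : mpol true X (Btr b s' p1).
    apply: PB => //; first by rewrite /s' /upd eqxx.
    move=> Y HY; rewrite /s' /upd; case: eqP => // _.
    case: (Hinv Y) => [->/=|Hc]; [by move=> E; apply: HY|exact: Hc].
  set L := msS Ws (MMu X p1).
  set M := msM Wm (MMu X (Btr b s' p1)).
  have Lpre : forall v, msS (upd Ws X L) p1 v -> L v by move=> v; apply: lfp_pre.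
  have Mpre : forall u, msM (upd Wm X M) (Btr b s' p1) u -> M u by move=> u; apply: lfp_pre.
  change (M w <-> L t); split.
    move=> HM.
    pose I := fun u => forall v, rel u v -> L v.
    have HI : forall u v, rel u v -> (I u <-> L v).
      move=> u v Huv; split; first by apply.
      move=> HL v' Hv'; by rewrite -(rel_fun_v Huv Hv').
    apply: (HM I) => //.
    move=> u Hu v Huv; apply: Lpre; by rewrite -(Hsub I L HI u v Huv).
  move=> HL.
  pose S := fun v => forall u, rel u v -> M u.
  suff : S t by apply.
  apply: (HL S) => v Hv u Huv.
  pose I := fun u => forall v', rel u v' -> S v'.
  have HI : forall u v, rel u v -> (I u <-> S v).
    move=> u0 v0 Huv0; split; first by apply.
    move=> HS v' Hv'; by rewrite -(rel_fun_v Huv0 Hv').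
  have Hu : msM (upd Wm X I) (Btr b s' p1) u by rewrite (Hsub I S HI u v Huv).
  apply: Mpre.
  have := @msem_mono AP _ (@mstep AP) Pi (Btr b s' p1) X true (upd Wm X I) (upd Wm X M) _ _ Hpol' u.
  apply => //.
  - move=> Z x HZ; rewrite /upd; case: eqP => //.
  - move=> x; rewrite /upd eqxx => HIx; case: (rel_tot_v x) => y0 Hy0; exact: (HIx y0 Hy0 x Hy0).
Qed.

Hypothesis Hinit : forall j, b j <-> bLag (Ej j).

Lemma rel_init_v t : (forall j, sstep G0 j (trk j) 0 (t j)) -> rel zv t.
Proof.
move=> Ht j; apply: (rel_init (@Erefl j) (@Esym j) (@Etrans j) (Hinit j)); exact/sstep_eq.
Qed.

Lemma AC psi : forall s Wm Ws, SLok psi -> mok psi -> inv s ->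
  (forall Y, mfree Y psi -> mclosed (s Y)) ->
  (forall X w t, rel w t -> (msM Wm (s X) w <-> Ws X t)) ->
  (forall Y, Wm Y zv <-> Ws Y zv) ->
  (msM Wm (Atr b s psi) zv <-> msS Ws psi zv).
Proof.
elim: psi => [d j|Y|p1 IH1 p2 IH2|p1 IH1|l p1 IH1|X p1 IH1] s Wm Ws HSL Hok Hinv Hloc Hs Hv.
- by [].
- exact: Hv.
- case: (SL_or HSL) => H1 H2; case: Hok => O1 O2.
  rewrite /= (IH1 s Wm Ws H1 O1 Hinv) ?(IH2 s Wm Ws H2 O2 Hinv) // => Y HY; apply: Hloc => /=; tauto.
- rewrite /= (IH1 s Wm Ws HSL Hok Hinv) //.
- case: (SL_next HSL) => H1 H2 /=; split.
    move=> H; case: (sstep_tot zv) => t' Ht'.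
    have Hr' : rel zv t' by apply: rel_init_v.
    exists t'; split; first by move=> j; apply/H2; exact: Ht'.
    by rewrite -(BC H1 Hok Hinv Hs Hr').
  case=> t' [Ht' Hm].
  have Hr' : rel zv t' by apply: rel_init_v => j; apply/H2; exact: Ht'.
  by rewrite (BC H1 Hok Hinv Hs Hr').
- case: Hok => Hpol Hok.
  set rho := Btr b s (MMu X p1).
  have Hrc : mclosed rho.
    move=> Z HZ; case: (FVB HZ) => Y [HY HZY]; exact: (Hloc Y HY Z HZY).
  set s' := upd s X rho.
  set L := msS Ws (MMu X p1).
  have Hrho : forall W w t, rel w t -> (msM W rho w <-> L t).
    move=> W w t Hr.
    have B0 := @BC (MMu X p1) s Wm Ws HSL (conj Hpol Hok) Hinv Hs w t Hr.
    apply: (iff_trans _ B0); apply: msem_ext => Z v HZ; by case: (Hrc Z).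
  have Hinv' : inv s'.
    move=> Y; rewrite /s' /upd; case: eqP => _; [by right|exact: Hinv].
  have Hloc' : forall Y, mfree Y p1 -> mclosed (s' Y).
    move=> Y HY; rewrite /s' /upd; case: eqP => [//|NYX]; apply: Hloc; split => //.
    by move=> E; apply: NYX.
  have Hsub : forall (I S : vec -> Prop), (forall v, v <> zv -> (S v <-> L v)) -> (I zv <-> S zv) ->
      (msM (upd Wm X I) (Atr b s' p1) zv <-> msS (upd Ws X S) p1 zv).
    move=> I S HSL' HIS; apply: IH1 => //.
      move=> Y u v Huv; case: (eqVneq Y X) => [->|NYX].
        rewrite /s' /upd eqxx; rewrite Hrho //; symmetry; apply: HSL'; exact: rel_pos_v Huv.
      have NYX' : Y <> X by apply/eqP.
      have -> : s' Y = s Y by rewrite /s' /upd (negbTE NYX).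
      have -> : upd Ws X S Y v = Ws Y v by rewrite /upd (negbTE NYX).
      rewrite (@upd_inv_sem AP _ (@mstep AP) Pi s Y X Wm I u (Hinv Y) NYX'); exact: Hs.
    move=> Y; rewrite /upd; case: eqP => // _; exact: Hv.
  have Hpol' : mpol true X (Atr b s' p1).
    apply: PA => // Y; rewrite /s' /upd; case: eqP => [_|NYX]; first exact: Hrc.
    case: (Hinv Y) => [->/=|Hc]; [by move=> E; apply: NYX|exact: Hc].
  set M := msM Wm (MMu X (Atr b s' p1)).
  have Lpre : forall v, msS (upd Ws X L) p1 v -> L v by move=> v; apply: lfp_pre.
  have Mpre : forall u, msM (upd Wm X M) (Atr b s' p1) u -> M u by move=> u; apply: lfp_pre.
  have Ha : M zv -> L zv.
    move=> HM; pose I := fun u => u = zv -> L zv.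
    apply: (HM I) => //.
    move=> u Hu Hz; subst u; apply: Lpre; rewrite -(Hsub I L) //.
    by split; [apply|move=> ? ?].
  change (M zv <-> L zv); split => // HL.
  pose S := fun v => (v = zv /\ M zv) \/ (v <> zv /\ L v).
  have HS : forall v, v <> zv -> (S v <-> L v).
    move=> v Hv0; split; [by case=> [[]|[]]|by move=> H; right].
  suff : S zv by case=> [[]|[]].
  apply: (HL S) => v Hv1.
  case: (classic (v = zv)) => [Ev|Nv].
    subst v; left; split => //; apply: Mpre; rewrite (Hsub M S) //.
    split; [by move=> H; left|by case=> [[]|[]]].
  right; split => //; apply: Lpre.
  have := @msem_mono AP _ (@sstep AP) Pi p1 X true (upd Ws X S) (upd Ws X L) _ _ Hpol v.
  apply => //.
  - move=> Z x HZ; rewrite /upd; case: eqP => //.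
  - move=> x; rewrite /upd eqxx; case=> [[-> HM]|[_ Hx]] //; exact: Ha.
Qed.
End Sem.
End Trans.

Lemma choice_gen (A B : Type) (R : A -> B -> Prop) :
  (forall a, exists b, R a b) -> exists f, forall a, R a (f a).
Proof.
move=> H. exists (fun j => proj1_sig (constructive_indefinite_description _ (H j))).
move=> j. exact: proj2_sig (constructive_indefinite_description _ (H j)).
Qed.

Lemma nn_and (P Q : Prop) : ~ (~ P \/ ~ Q) <-> P /\ Q.
Proof. split; last tauto. move=> H; split; apply: NNPP => Hc; apply: H; tauto. Qed.

Section Final.
Variable AP : finType.
Variable ff : tform AP.
Variable G0 : slabel AP.
Hypothesis ffs : forall tr i, ~ tsem tr V0 ff i.
Hypothesis ffw : twf ff.
Hypothesis G0w : forall g d, lIn g G0 -> lIn d g -> twf d.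
Notation MF := (mform AP (mlabel AP)).
Notation SF := (mform AP (slabel AP)).
Notation mvar X := (MVar AP (mlabel AP) X).

Lemma bLag_sem Pi j : tsem (trk Pi j) V0 (Lag (Dj ff G0 j)) 0 <-> bLag (Ej G0 Pi j).
Proof.
rewrite Lag_sem; last exact: (Dj_wf ffw G0w j).1.
have E := Dsem G0 Pi ffs j.
rewrite /bLag; split; case=> H.
- left; exact/E.
- right => k Hk; apply: (H k); exact/E.
- left; exact/E.
- right => k Hk; apply: (H k); exact/E.
Qed.

Lemma choose_sem Pi psi : forall n bb,
  msem (@mstep AP) Pi W0 (choose ff G0 n bb psi) zv <->
  exists b' : nat -> bool, (forall j, j < n -> (b' j <-> bLag (Ej G0 Pi j))) /\
     (forall j, n <= j -> b' j = bb j) /\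
     msem (@mstep AP) Pi W0 (Atr ff G0 b' (fun X => mvar X) psi) zv.
Proof.
elim=> [|n IH] bb.
  split; first by move=> H; exists bb.
  case=> b' [_ [Hb H]]; have -> : bb = b' by apply: functional_extensionality => j; rewrite Hb.
  exact: H.
have -> : msem (@mstep AP) Pi W0 (choose ff G0 n.+1 bb psi) zv <->
   (bLag (Ej G0 Pi n) /\ msem (@mstep AP) Pi W0 (choose ff G0 n (upd bb n true) psi) zv) \/
   (~ bLag (Ej G0 Pi n) /\ msem (@mstep AP) Pi W0 (choose ff G0 n (upd bb n false) psi) zv).
  set T := tsem (trk Pi n) V0 (Lag (Dj ff G0 n)) 0.
  have -> : msem (@mstep AP) Pi W0 (choose ff G0 n.+1 bb psi) zv <->
     ~ (~ T \/ ~ msem (@mstep AP) Pi W0 (choose ff G0 n (upd bb n true) psi) zv) \/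
     ~ (~ ~ T \/ ~ msem (@mstep AP) Pi W0 (choose ff G0 n (upd bb n false) psi) zv) by [].
  rewrite !nn_and /T (bLag_sem Pi n); tauto.
split.
  case=> [[HL /IH [b' [H1 [H2 H3]]]]|[HL /IH [b' [H1 [H2 H3]]]]]; exists b'; split => //.
  - move=> j Hj; case: (ltngtP j n) => [Hl|Hl|->]; first exact: H1; first lia.
    by rewrite H2 // /upd eqxx; split.
  - split => // j Hj; rewrite H2; last lia.
    rewrite /upd; case: eqP => // E; lia.
  - move=> j Hj; case: (ltngtP j n) => [Hl|Hl|->]; first exact: H1; first lia.
    by rewrite H2 // /upd eqxx; split.
  - split => // j Hj; rewrite H2; last lia.
    rewrite /upd; case: eqP => // E; lia.
case=> b' [H1 [H2 H3]].
have Hn : b' n <-> bLag (Ej G0 Pi n) by apply: H1.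
have H2' : forall bv, b' n = bv -> forall j, n <= j -> b' j = upd bb n bv j.
  move=> bv Ebv j Hj; rewrite /upd; case: eqP => [->//|Hne]; apply: H2; lia.
case Ebn : (b' n).
  left; split; first by apply/Hn; rewrite Ebn.
  apply/IH; exists b'; split; [move=> j Hj; apply: H1; lia|split => //; exact: H2'].
right; split; first by move=> /Hn; rewrite Ebn.
apply/IH; exists b'; split; [move=> j Hj; apply: H1; lia|split => //; exact: H2'].
Qed.

Lemma body_correct Pi k psi : size G0 <= k -> SLok G0 psi -> mok psi -> mclosed psi ->
  (msem (@mstep AP) Pi W0 (choose ff G0 k (fun _ => true) psi) zv <->
   msem (@sstep AP) Pi W0 psi zv).
Proof.
move=> Hk HSL Hok Hc.
have Hhigh : forall j, k <= j -> bLag (Ej G0 Pi j).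
  move=> j Hj; right => i Hd; apply: Hd => d; rewrite nth_default //; lia.
have AC' : forall b' : nat -> bool, (forall j, b' j <-> bLag (Ej G0 Pi j)) ->
    msem (@mstep AP) Pi W0 (Atr ff G0 b' (fun X => mvar X) psi) zv <-> msem (@sstep AP) Pi W0 psi zv.
  move=> b' Hb; apply: (@AC AP ff G0 Pi ffs ffw G0w b' Hb psi (fun X => mvar X) W0 W0 HSL Hok).
  - by move=> Y; left.
  - by move=> Y HY; case: (Hc Y).
  - by [].
  - by [].
rewrite choose_sem; split.
  case=> b' [H1 [H2 H3]].
  have Hb : forall j, b' j <-> bLag (Ej G0 Pi j).
    move=> j; case: (ltnP j k) => Hj; first exact: H1.
    by rewrite H2 //; split => // _; apply: Hhigh.
  by rewrite -(AC' b' Hb).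
move=> H.
have [b' Hb'] : exists b' : nat -> bool, forall j, b' j <-> bLag (Ej G0 Pi j).
  apply: (choice_gen (R := fun j (bv : bool) => bv <-> bLag (Ej G0 Pi j))) => j.
  case: (classic (bLag (Ej G0 Pi j))) => Hj; [exists true|exists false]; by split.
exists b'; split; first by move=> j _; apply: Hb'.
split; last by rewrite (AC' b' Hb').
move=> j Hj; apply/Hb'; exact: Hhigh.
Qed.
End Final.

Lemma lIn_map (A B : Type) (f : A -> B) s y : lIn y (map f s) -> exists x, lIn x s /\ y = f x.
Proof.
elim: s => [|x s IH] //= [<-|H]; first by exists x; split => //; left.
case: (IH H) => x' [H1 H2]; exists x'; split => //; by right.
Qed.

Lemma mwf_labels (AP : finType) L lwf k (psi : mform AP L) l :
  mwf lwf k psi -> lIn l (mlabels psi) -> lwf k l.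
Proof.
elim: psi => [d j|Y|p1 IH1 p2 IH2|p1 IH1|l' p1 IH1|X p1 IH1] //=.
- case=> H1 H2; rewrite lIn_cat; case; [exact: IH1|exact: IH2].
- case=> H1 H2 [<-//|]; exact: IH1.
- case=> _ H; exact: IH1.
Qed.

Lemma mbasis_labels (AP : finType) L lb B (psi : mform AP L) l :
  mbasis lb B psi -> lIn l (mlabels psi) -> lb B l.
Proof.
elim: psi => [d j|Y|p1 IH1 p2 IH2|p1 IH1|l' p1 IH1|X p1 IH1] //=.
- case=> H1 H2; rewrite lIn_cat; case; [exact: IH1|exact: IH2].
- case=> H1 H2 [<-//|]; exact: IH1.
Qed.

Lemma mwf_mok (AP : finType) L lwf k (psi : mform AP L) : mwf lwf k psi -> mok psi.
Proof.
elim: psi => [d j|Y|p1 IH1 p2 IH2|p1 IH1|l' p1 IH1|X p1 IH1] //=.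
- by case=> _ [].
- case=> H1 H2; split; [exact: IH1|exact: IH2].
- case=> _ H; exact: IH1.
- case=> H1 H2; split => //; exact: IH1.
Qed.

Fixpoint hmap (A : finType) L1 L2 (f : mform A L1 -> mform A L2) (phi : hform A L1) : hform A L2 :=
  match phi with
  | HEx p => HEx (hmap f p)
  | HAll p => HAll (hmap f p)
  | HBody psi => HBody (f psi)
  end.

Fixpoint qd (A : finType) L (phi : hform A L) : nat :=
  match phi with HEx p | HAll p => (qd p).+1 | HBody _ => 0 end.

Lemma hbody_hmap (A : finType) L1 L2 (f : mform A L1 -> mform A L2) phi :
  hbody (hmap f phi) = f (hbody phi).
Proof. by elim: phi. Qed.

Lemma qd_hmap (A : finType) L1 L2 (f : mform A L1 -> mform A L2) phi : qd (hmap f phi) = qd phi.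
Proof. by elim: phi => //= p ->. Qed.

Lemma hwf_iff (A : finType) L lwf (phi : hform A L) : forall n,
  hwf lwf n phi <-> mwf lwf (n + qd phi) (hbody phi) /\ (forall X, ~ mfree X (hbody phi)).
Proof.
elim: phi => [p IH|p IH|psi] n /=.
- by rewrite IH addSnnS.
- by rewrite IH addSnnS.
- by rewrite addn0.
Qed.

Lemma hsat_hmap (A : finType) L1 L2 st1 st2 (f : mform A L1 -> mform A L2) (phi : hform A L1) T :
  (forall Pi, msem st1 Pi W0 (hbody phi) zv <-> msem st2 Pi W0 (f (hbody phi)) zv) ->
  forall Pi, hsat st1 T Pi phi <-> hsat st2 T Pi (hmap f phi).
Proof.
elim: phi => [p IH|p IH|psi] H Pi /=.
- split; case=> tr [Ht Hs]; exists tr; split => //; move: Hs; by rewrite IH.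
- split=> Hs tr Ht; move: (Hs tr Ht); by rewrite IH.
- exact: H.
Qed.

Section Good.
Variable AP : finType.
Variable B : tform AP -> Prop.
Hypothesis Bc : Bclosed B.
Variable ff : tform AP.
Hypothesis Bff : B ff.
Hypothesis ffw : twf ff.
Variable G0 : slabel AP.
Hypothesis G0w : forall g d, lIn g G0 -> lIn d g -> twf d.
Hypothesis G0B : forall g d, lIn g G0 -> lIn d g -> B d.
Variable k : nat.
Hypothesis Hsz : size G0 = k.
Notation MF := (mform AP (mlabel AP)).
Notation SF := (mform AP (slabel AP)).
Notation mvar X := (MVar AP (mlabel AP) X).

Definition Good (phi : MF) := mwf (@mlwf AP) k phi /\ mbasis (@mlbasis AP) B phi /\
  (forall l, lIn l (mlabels phi) -> l = Del ff G0).

Lemma Good_var X : Good (mvar X).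
Proof. by []. Qed.

Lemma nth_G0 j d : lIn d (nth [::] G0 j) -> exists g, lIn g G0 /\ lIn d g.
Proof.
case: (ltnP j (size G0)) => Hj Hd.
  exists (nth [::] G0 j); split => //; exact: lIn_nth.
by move: Hd; rewrite nth_default.
Qed.

Lemma Dj_B j : B (Dj ff G0 j).
Proof.
apply: (B_Dform Bc Bff) => d Hd; case: (nth_G0 Hd) => g [Hg Hdg]; split; first exact: (G0B Hg).
exact: (G0w Hg Hdg).1.
Qed.

Lemma Del_wf : mlwf k (Del ff G0).
Proof.
split; first by rewrite size_map.
move=> d Hd; case: (@lIn_map _ _ (Dform ff) G0 d Hd) => g [Hg ->]; apply: twf_Dform => // d' Hd'; exact: G0w Hg Hd'.
Qed.

Lemma Del_B : mlbasis B (Del ff G0).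
Proof.
move=> d Hd; case: (@lIn_map _ _ (Dform ff) G0 d Hd) => g [Hg ->]; apply: (B_Dform Bc Bff) => d' Hd'; split; first exact: G0B Hg Hd'.
exact: (G0w Hg Hd').1.
Qed.

Lemma Good_B b psi : forall s, mwf (@slwf AP) k psi -> mbasis (@slbasis AP) B psi -> inv s ->
  (forall Y, Good (s Y)) -> Good (Btr ff G0 b s psi).
Proof.
elim: psi => [d j|Y|p1 IH1 p2 IH2|p1 IH1|l p1 IH1|X p1 IH1] s /= Hw Hb Hinv HG.
- case: Hw => Hj Hd; split; first (split => //; apply: twf_sh => //; exact: Dj_wf).
  split => //; apply: B_sh => //; first exact: Dj_B.
  + exact: (Dj_wf ffw G0w j).1.
  + exact: Hd.1.
- exact: HG.
- case: Hw => W1 W2; case: Hb => B1 B2.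
  case: (IH1 s W1 B1 Hinv HG) => G1 [G2 G3]; case: (IH2 s W2 B2 Hinv HG) => G1' [G2' G3'].
  split; first by split.
  split; first by split.
  move=> l; rewrite lIn_cat; case; [exact: G3|exact: G3'].
- exact: IH1.
- case: Hw => _ W1; case: Hb => _ B1.
  case: (IH1 s W1 B1 Hinv HG) => G1 [G2 G3].
  split; first (split => //; exact: Del_wf).
  split; first (split => //; exact: Del_B).
  by move=> l' [<-|]; [|apply: G3].
- case: Hw => Hp W1.
  have Hinv' : inv (upd s X (mvar X)).
    move=> Y; rewrite /upd; case: eqP => [->|_]; [by left|exact: Hinv].
  have HG' : forall Y, Good (upd s X (mvar X) Y).
    move=> Y; rewrite /upd; case: eqP => _; [exact: Good_var|exact: HG].
  case: (IH1 _ W1 Hb Hinv' HG') => G1 [G2 G3].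
  split => //; split => //.
  apply: PB => //; first by rewrite /upd eqxx.
  move=> Y HY; rewrite /upd; case: eqP => // _.
  case: (Hinv Y) => [->/=|Hc]; [by move=> E; apply: HY|exact: Hc].
Qed.

Lemma Good_A b psi : forall s, mwf (@slwf AP) k psi -> mbasis (@slbasis AP) B psi -> inv s ->
  (forall Y, mfree Y psi -> mclosed (s Y)) ->
  (forall Y, Good (s Y)) -> Good (Atr ff G0 b s psi).
Proof.
elim: psi => [d j|Y|p1 IH1 p2 IH2|p1 IH1|l p1 IH1|X p1 IH1] s /= Hw Hb Hinv Hloc HG.
- by [].
- exact: Good_var.
- case: Hw => W1 W2; case: Hb => B1 B2.
  have L1 : forall Y, mfree Y p1 -> mclosed (s Y) by move=> Y HY; apply: Hloc; left.
  have L2 : forall Y, mfree Y p2 -> mclosed (s Y) by move=> Y HY; apply: Hloc; right.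
  case: (IH1 s W1 B1 Hinv L1 HG) => G1 [G2 G3]; case: (IH2 s W2 B2 Hinv L2 HG) => G1' [G2' G3'].
  split; first by split.
  split; first by split.
  move=> l; rewrite lIn_cat; case; [exact: G3|exact: G3'].
- exact: IH1.
- case: Hw => _ W1; case: Hb => _ B1; exact: Good_B.
- case: Hw => Hp W1.
  set rho := Btr ff G0 b s (MMu X p1).
  have Hrc : mclosed rho.
    move=> Z HZ; case: (FVB HZ) => Y [HY HZY]; exact: (Hloc Y HY Z HZY).
  have Grho : Good rho by apply: Good_B => //; split.
  have Hinv' : inv (upd s X rho).
    move=> Y; rewrite /upd; case: eqP => _; [by right|exact: Hinv].
  have Hloc' : forall Y, mfree Y p1 -> mclosed (upd s X rho Y).
    move=> Y HY; rewrite /upd; case: eqP => [//|NYX]; apply: Hloc; split => //.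
    by move=> E; apply: NYX.
  have HG' : forall Y, Good (upd s X rho Y).
    move=> Y; rewrite /upd; case: eqP => _; [exact: Grho|exact: HG].
  case: (IH1 _ W1 Hb Hinv' Hloc' HG') => G1 [G2 G3].
  split => //; split => //.
  apply: PA => // Y; rewrite /upd; case: eqP => [_|NYX]; first exact: Hrc.
  case: (Hinv Y) => [->/=|Hc]; [by move=> E; apply: NYX|exact: Hc].
Qed.

Lemma Good_choose psi : mwf (@slwf AP) k psi -> mbasis (@slbasis AP) B psi -> mclosed psi ->
  forall n bb, n <= k -> Good (choose ff G0 n bb psi) /\ mclosed (choose ff G0 n bb psi).
Proof.
move=> Hw Hb Hc; elim=> [|n IH] bb Hn /=.
  split.
    apply: Good_A => //; [by move=> Y; left|by move=> Y HY; case: (Hc Y)].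
  move=> Z /FVA [H|[Y [H _]]]; [exact: (Hc Z H)|exact: (Hc Y H)].
have Ht : Good (MTest (mlabel AP) (Lag (Dj ff G0 n)) n).
  split; first (split; [lia|apply: twf_Lag; exact: Dj_wf]).
  split => //; apply: B_Lag => //; [exact: Dj_B|exact: (Dj_wf ffw G0w n).1].
case: (IH (upd bb n true)) => [|[G1 [G2 G3]] C1]; first lia.
case: (IH (upd bb n false)) => [|[G1' [G2' G3']] C1']; first lia.
case: Ht => [T1 [T2 _]].
split.
  split; first by rewrite /=; tauto.
  split; first by rewrite /=; tauto.
  move=> l Hl.
  have : lIn l (mlabels (choose ff G0 n (upd bb n true) psi)) \/
         lIn l (mlabels (choose ff G0 n (upd bb n false) psi)).
    move: Hl; rewrite /= !lIn_cat /=; tauto.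
  case; [exact: G3|exact: G3'].
move=> Z /=; move: (C1 Z) (C1' Z); tauto.
Qed.
End Good.

Lemma lIn_nseq (A : Type) (x y : A) n : lIn y (nseq n x) -> y = x.
Proof. elim: n => [|n IH] //= [<-//|]; exact: IH. Qed.

Lemma main_gen (AP : finType) (B : tform AP -> Prop) (ff : tform AP) :
  Bclosed B -> B ff -> twf ff -> (forall tr i, ~ tsem tr V0 ff i) -> mumb_at_least_stut B B.
Proof.
move=> Bc Bff ffw ffs phi [Hwf [Hu Hb]].
set k := qd phi; set psi := hbody phi.
have [Hmw Hcl] : mwf (@slwf AP) k psi /\ (forall X, ~ mfree X psi).
  by move: Hwf; rewrite hwf_iff add0n.
have [G0 [HG1 [HG2 HG3]]] : exists G0 : slabel AP, size G0 = k /\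
    (forall g d, lIn g G0 -> lIn d g -> twf d /\ B d) /\ SLok G0 psi.
  case E : (@mlabels AP (slabel AP) psi) => [|G rest].
    exists (nseq k [::]); split; first by rewrite size_nseq.
    split; first by move=> g d Hg; rewrite (lIn_nseq Hg).
    by move=> l; rewrite E.
  have HG : lIn G (mlabels psi) by rewrite E; left.
  have [Hs Hw] := mwf_labels Hmw HG.
  have HbG := mbasis_labels Hb HG.
  exists G; split => //; split; first by move=> g d Hg Hd; split; [exact: Hw Hg Hd|exact: HbG g d Hg Hd].
  move=> l Hl j tr i i'; case: (Hu l G Hl HG) => _ Hset.
  rewrite /sstep; split; apply: sm_ext => m; split; case=> d [Hd Hn]; exists d; split => //;
    exact/Hset.
have G0w : forall g d, lIn g G0 -> lIn d g -> twf d by move=> g d Hg Hd; exact: (HG2 g d Hg Hd).1.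
have G0B : forall g d, lIn g G0 -> lIn d g -> B d by move=> g d Hg Hd; exact: (HG2 g d Hg Hd).2.
have [[Gw [Gb Gl]] Gc] := Good_choose Bc Bff ffw G0w G0B HG1 Hmw Hb Hcl (fun _ => true) (leqnn k).
exists (hmap (choose ff G0 k (fun _ => true)) phi); split.
  split; first by rewrite hwf_iff hbody_hmap qd_hmap add0n.
  split; last by rewrite hbody_hmap.
  by move=> D1 D2; rewrite hbody_hmap => /Gl -> /Gl ->.
move=> T; rewrite /smodels /mmodels /models; apply: hsat_hmap => Pi.
symmetry; apply: body_correct => //.
- by rewrite HG1.
- exact: mwf_mok Hmw.
Qed.

Lemma isLTL_inh (AP : finType) (d : tform AP) : isLTL d -> exists a : AP, True.
Proof. elim=> //; by move=> a; exists a. Qed.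

Lemma mu_false (AP : finType) L st Pi W v : ~ msem st Pi W (MMu 0 (MVar AP L 0)) v.
Proof. move=> H; apply: (H (fun _ => False)) => u /=; by rewrite /upd eqxx. Qed.

Lemma empty_case (AP : finType) : (forall a : AP, False) -> mumb_at_least_stut (@isLTL AP) (@isLTL AP).
Proof.
move=> Hemp phi [Hwf [Hu Hb]].
set psi := hbody phi.
have Hind : forall (q : mform AP (slabel AP)), mbasis (@slbasis AP) (@isLTL AP) q ->
    forall W Pi Pi' v, msem (@sstep AP) Pi W q v <-> msem (@sstep AP) Pi' W q v.
  elim=> [d j|Y|p1 IH1 p2 IH2|p1 IH1|l p1 IH1|X p1 IH1] /= Hq W Pi Pi' v.
  - by case: (isLTL_inh Hq) => a; case: (Hemp a).
  - done.
  - case: Hq => H1 H2; rewrite (IH1 H1 W Pi Pi') (IH2 H2 W Pi Pi') //.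
  - by rewrite (IH1 Hq W Pi Pi').
  - case: Hq => Hl H1.
    have St : forall j tr i i', sstep l j tr i i' <-> i' = i.+1.
      move=> j tr i i'.
      have Hno : forall m, ~ (exists d, lIn d (nth [::] l j) /\
                  ~ (tsem tr V0 d i <-> tsem tr V0 d m)).
        move=> m [d [Hd _]]; case: (ltnP j (size l)) => Hj.
          have := Hl _ _ (lIn_nth [::] Hj) Hd; case/isLTL_inh => a; case: (Hemp a).
        by move: Hd; rewrite nth_default.
      rewrite /sstep; split.
        by case=> [[_ [H _]]|[_ ->]] //; case: (Hno i').
      move=> ->; right; split => // m _; exact: Hno.
    split; case=> w [Hw Hm]; exists w; split.
    + by move=> j; apply/St; move/St: (Hw j).
    + by rewrite -(IH1 H1 W Pi Pi').
    + by move=> j; apply/St; move/St: (Hw j).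
    + by rewrite (IH1 H1 W Pi Pi').
  - split => H I HI; apply: H => u Hu0; apply: HI; move: Hu0; by rewrite (IH1 Hq _ Pi Pi').
set c := msem (@sstep AP) [::] W0 psi zv.
have Hc : forall Pi, msem (@sstep AP) Pi W0 psi zv <-> c by move=> Pi; apply: Hind.
have [Hmw Hcl] : mwf (@slwf AP) (qd phi) psi /\ (forall X, ~ mfree X psi).
  by move: Hwf; rewrite hwf_iff add0n.
pose bF : mform AP (mlabel AP) := MMu 0 (MVar AP (mlabel AP) 0).
have bFw : mwf (@mlwf AP) (qd phi) bF by [].
have bFc : forall X, ~ mfree X bF by move=> X /= [H1 H2]; apply: H1.
case: (classic c) => Hcc.
  exists (hmap (fun _ => MNot bF) phi); split.
    split; first by rewrite hwf_iff hbody_hmap qd_hmap add0n.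
    split; last by rewrite hbody_hmap.
    by move=> D1 D2; rewrite hbody_hmap.
  move=> T; rewrite /smodels /mmodels /models; apply: hsat_hmap => Pi.
  apply: (iff_trans (Hc Pi)); split; last by move=> _.
  move=> _ /= H; apply: (H (fun _ => False)) => u; by rewrite /upd eqxx.
exists (hmap (fun _ => bF) phi); split.
  split; first by rewrite hwf_iff hbody_hmap qd_hmap add0n.
  split; last by rewrite hbody_hmap.
  by move=> D1 D2; rewrite hbody_hmap.
move=> T; rewrite /smodels /mmodels /models; apply: hsat_hmap => Pi.
apply: (iff_trans (Hc Pi)); split => [H|/= H]; first by case: Hcc.
exfalso; apply: (H (fun _ => False)) => u; by rewrite /upd eqxx.
Qed.

Unset Implicit Arguments.
Theorem lemma6p2 (AP : finType) :
  mumb_at_least_stut (@isLTL AP) (@isLTL AP) /\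
  mumb_at_least_stut (fun _ : tform AP => True) (fun _ : tform AP => True).
Proof.
split.
  case: (pickP (fun _ : AP => true)) => [a0 _|Hn]; last first.
    by apply: empty_case => a; move: (Hn a).
  pose ff : tform AP := TNot (TOr (TAp a0) (TNot (TAp a0))).
  apply: (main_gen (ff := ff)).
  - split.
    + by move=> a b Ha Hb; constructor.
    + by move=> a Ha; constructor.
    + by move=> a Ha; constructor.
    + move=> a b Ha Hb Ca Cb; apply: LTL_until => //; try exact: Ca; try exact: Cb.
  - rewrite /ff; apply: LTL_not; apply: LTL_or; [apply: LTL_ap|apply: LTL_not; apply: LTL_ap].
  - rewrite /ff; split; last by [].
    by move=> Y /=; tauto.
  - rewrite /ff => tr i /=; tauto.
apply: (main_gen (ff := TMu 0 (TVar AP 0))).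
- by split.
- done.
- split => //=; by move=> Y [H1 H2]; apply: H1.
- move=> tr i /= H; apply: (H (fun _ => False)) => k; by rewrite /upd eqxx.
Qed.
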